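(* Let $w$ be an infinite word on $\mathcal{A}$ with infinitely many palindromic prefixes, and let $(n_i)_{i\ge1}$ be the increasing sequence of the lengths of its palindromic prefixes ($n_1=0$). The following are equivalent: (i) $n_{i+1}\le 2n_i+1$ for all $i\ge1$; (ii) there is a function $\psi$ (as in the context) with $w=w_\psi$; (iii) there is a reduced function $\psi$ with $w=w_\psi$. Moreover, the reduced function $\psi$ in (iii) is unique.
   Context: $\mathcal{A}$ is an alphabet (finite or infinite) disjoint from $\mathbb{N}^*=\{1,2,\dots\}$; $\varepsilon$ is a palindrome. The functions considered are maps $\psi:\mathbb{N}^*\to\mathbb{N}^*\sqcup\mathcal{A}$ such that for every $n\ge1$ either $\psi(n)\in\mathcal{A}$ or $1\le\psi(n)\le n-1$. Associated words: $\pi_1=\varepsilon$ and, for $i\ge1$: if $\psi(i)\in\mathcal{A}$, $\pi_{i+1}=\pi_i\,\psi(i)\,\pi_i$; if $\psi(i)\in\mathbb{N}^*$, then $\pi_{\psi(i)}$ is a prefix of $\pi_i$, and writing $\pi_i=\pi_{\psi(i)}b_i$, $\pi_{i+1}=\pi_ib_i$. Each $\pi_i$ is a palindrome and a proper prefix of $\pi_{i+1}$; $w_\psi$ is the infinite word having all $\pi_i$ as prefixes. Let $(t_k)_{k\ge0}$ be the (finite or infinite) family, in increasing order, of all $n\ge1$ with $\psi(n)\in\mathcal{A}$ or $1\le\psi(n)\le n-2$. $\psi$ is reduced if for every $k\ge1$ such that $t_k$ exists: $\psi(t_k)\neq\psi(t_{k-1})$, and either $\psi(t_k)\in\mathcal{A}$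 or $\psi(t_k)<t_{k-1}$. *)

(* Defs.v *)
From mathcomp Require Import all_boot.
Set Implicit Arguments. Unset Strict Implicit. Unset Printing Implicit Defensive.

(* The disjoint union N* ⊔ A is modelled by
   the sum type ((nat + A)%type): inl m = the integer m, inr a = the letter a.
   Functions psi : N* -> N* ⊔ A are modelled as psi : nat -> (nat + A)%type whose
   value at 0 is irrelevant (only arguments n >= 1 are ever used).
   Infinite words are w : nat -> A (letters indexed from 0). *)

Section Defs.
Variable A : Type.

Definition valid_psi (psi : nat -> (nat + A)%type) : Prop :=
  forall n, 1 <= n ->
    match psi n with inr _ => true | inl m => (1 <= m) && (m <= n.-1) end.

(* pis psi k = [:: pi_1; pi_2; ...; pi_(k+1)] *)
Fixpoint pis (psi : nat -> (nat + A)%type) (k : nat) : seq (seq A) :=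
  match k with
  | 0 => [:: [::]]
  | k'.+1 =>
      let l := pis psi k' in
      let p := last [::] l in
      rcons l (match psi k'.+1 with
               | inr a => p ++ a :: p
               | inl m => p ++ drop (size (nth [::] l m.-1)) p
                          (* pi_i = pi_(psi i) b_i, pi_(i+1) = pi_i b_i *)
               end)
  end.

Definition pi (psi : nat -> (nat + A)%type) (i : nat) : seq A :=
  nth [::] (pis psi i.-1) i.-1.

Definition prefix_of (s : seq A) (w : nat -> A) : Prop :=
  forall k, k < size s -> nth (w k) s k = w k.

Definition is_wpsi (psi : nat -> (nat + A)%type) (w : nat -> A) : Prop :=
  forall i, 1 <= i -> prefix_of (pi psi i) w.

(* t is one of the t_k : psi(t) ∈ A or 1 <= psi(t) <= t-2 *)
Definition in_T (psi : nat -> (nat + A)%type) (t : nat) : Prop :=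
  1 <= t /\ match psi t with inr _ => true | inl m => (1 <= m) && (m <= t - 2) end.

Definition reduced (psi : nat -> (nat + A)%type) : Prop :=
  forall s t, in_T psi s -> in_T psi t -> s < t ->
    (forall u, s < u -> u < t -> ~ in_T psi u) ->
    psi t <> psi s /\
    match psi t with inr _ => true | inl m => m < s end.

Definition pal_prefix (w : nat -> A) (n : nat) : Prop :=
  forall k, k < n -> w k = w (n.-1 - k).

Definition inf_pal_prefixes (w : nat -> A) : Prop :=
  forall N, exists n, N <= n /\ pal_prefix w n.

Definition pal_gap_cond (w : nat -> A) : Prop :=
  forall m m', pal_prefix w m -> pal_prefix w m' -> m < m' ->
    (forall u, m < u -> u < m' -> ~ pal_prefix w u) ->
    m' <= m.*2.+1.

End Defs.

(* Main.v *)
Require Import Defs.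
From mathcomp Require Import all_boot zify.
From Stdlib Require Import Classical ClassicalEpsilon.
Set Implicit Arguments. Unset Strict Implicit. Unset Printing Implicit Defensive.


Section Words.
Variable A : Type.
Variable x0 : A.

Definition palw (x : seq A) := rev x = x.
Definition per (x : seq A) p := forall t, t + p < size x -> nth x0 x t = nth x0 x (t + p).

Lemma pal_nth x t : palw x -> t < size x -> nth x0 x t = nth x0 x (size x - t.+1).
Proof. move=> H ht; by rewrite -{1}H nth_rev. Qed.

Lemma nth_pal x : (forall t, t < size x -> nth x0 x t = nth x0 x (size x - t.+1)) -> palw x.
Proof.
move=> H; apply: (@eq_from_nth _ x0); first by rewrite size_rev.
move=> t; rewrite size_rev => ht; by rewrite nth_rev // [RHS]H.
Qed.

Lemma per_take x p L : per x p -> per (take L x) p.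
Proof.
move=> H t; rewrite size_take_min => ht.
rewrite !nth_take; try lia. apply: H. lia.
Qed.

Lemma per_mod x p : 0 < p -> per x p -> forall t, t < size x -> nth x0 x t = nth x0 x (t %% p).
Proof.
move=> p0 H t; elim: t {-2}t (leqnn t) => [|n IH] t ht hs.
  have -> : t = 0 by lia. by rewrite mod0n.
case: (ltnP t p) => htp; first by rewrite modn_small.
have -> : t = (t - p) + p by lia.
rewrite -H; last by lia.
rewrite modnDr IH //; lia.
Qed.

Lemma mod_per x p : (forall t, t < size x -> nth x0 x t = nth x0 x (t %% p)) -> per x p.
Proof. move=> H t ht; rewrite H; last lia. rewrite (H (t+p)) // modnDr. done. Qed.

Lemma per_ext x G g L : 0 < G -> 0 < g -> per x G -> g %| G -> G <= L ->
  per (take L x) g -> per x g.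
Proof.
move=> G0 g0 HG dv GL Hg; apply: mod_per => t ht.
have hm : t %% G < G by rewrite ltn_mod.
have hm' : t %% G <= t by apply: leq_mod.
rewrite (per_mod G0 HG ht).
rewrite -(nth_take x0 (n0:=L)); last lia.
rewrite (per_mod g0 Hg); last by rewrite size_take_min; lia.
rewrite nth_take; last first.
  have : t %% G %% g <= t %% G by apply: leq_mod. lia.
by rewrite -(modn_dvdm t dv).
Qed.

Lemma per_sub x p q : per x p -> per x q -> p < q -> p + q <= size x -> per x (q - p).
Proof.
move=> Hp Hq pq hs t ht.
case: (ltnP (t + q) (size x)) => h.
  rewrite Hq // (Hp (t + (q - p))); last lia.
  by have -> : t + (q - p) + p = t + q by lia.
have -> : t = (t - p) + p by lia.
rewrite -Hp; last lia.
rewrite Hq; last lia.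
by have -> : t - p + q = t - p + p + (q - p) by lia.
Qed.

Lemma FW x p q : per x p -> per x q -> 0 < p -> 0 < q -> p + q <= size x -> per x (gcdn p q).
Proof.
move=> Hp Hq p0 q0 hs.
elim: (p + q) {-2}p {-2}q (leqnn (p+q)) p0 q0 Hp Hq hs => [|N IH] a b hab a0 b0 Ha Hb hs'.
  lia.
case: (ltngtP a b) => h.
- have E : gcdn a b = gcdn a (b - a) by rewrite -{1}(subnK (ltnW h)) gcdnDr.
  rewrite E; apply: IH => //; try lia; apply: per_sub => //; lia.
- have E : gcdn a b = gcdn (a - b) b.
    by rewrite -{1}(subnK (ltnW h)) gcdnC gcdnDr gcdnC.
  rewrite E; apply: IH => //; try lia; apply: per_sub => //; lia.
- by rewrite h gcdnn.
Qed.

Lemma border_per x k : palw x -> k <= size x -> palw (take k x) -> per x (size x - k).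
Proof.
move=> Hx hk Hk t ht.
rewrite [RHS](pal_nth Hx); last lia.
have -> : size x - (t + (size x - k)).+1 = k - t.+1 by lia.
rewrite -(nth_take x0 (n0:=k)); last lia.
rewrite -[RHS](nth_take x0 (n0:=k)); last lia.
rewrite (pal_nth Hk); last by rewrite size_take_min; lia.
rewrite size_take_min; have -> : minn k (size x) = k by lia.
done.
Qed.

Lemma per_pal_take x f : palw x -> per x f -> f <= size x -> palw (take (size x - f) x).
Proof.
move=> Hx Hf hf; apply: nth_pal; rewrite size_take_min => t ht.
have e : minn (size x - f) (size x) = size x - f by lia.
rewrite e in ht *.
rewrite !nth_take; try lia.
rewrite Hf; last lia.
rewrite (pal_nth Hx); last lia.
by congr nth; lia.
Qed.

End Words.


Section Pis.
Variable A : Type.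
Variable psi : nat -> (nat + A)%type.
Hypothesis Hv : valid_psi psi.

Notation P := (Defs.pi psi).
Notation l i := (size (P i)).

Lemma size_pis k : size (pis psi k) = k.+1.
Proof. by elim: k => [|k IH] //=; rewrite size_rcons IH. Qed.

Lemma nth_pis k j : j <= k -> nth [::] (pis psi k) j = P j.+1.
Proof.
elim: k => [|k IH] hj; first by have -> : j = 0 by lia.
case: (ltnP j k.+1) => h.
  rewrite /= nth_rcons size_pis h IH //.
by have -> : j = k.+1 by lia.
Qed.

Lemma pi1 : P 1 = [::].
Proof. by []. Qed.

Lemma validP n : 0 < n -> match psi n with inr _ => True | inl m => 0 < m /\ m < n end.
Proof. move=> hn; have := Hv hn; case: (psi n) => // m /andP[]; lia. Qed.

Lemma piS i : 0 < i -> P i.+1 =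
  match psi i with inr a => P i ++ a :: P i
  | inl m => P i ++ drop (size (P m)) (P i) end.
Proof.
case: i => [//|k] _.
have hv := validP (ltn0Sn k).
rewrite /Defs.pi /= nth_rcons size_pis ltnn eqxx.
rewrite -nth_last size_pis /=.
case E: (psi k.+1) => [m|a] //.
rewrite E in hv.
case: m hv {E} => [[]//|m] hv /=.
rewrite (@nth_pis k m) //; lia.
Qed.

Lemma basic i : 0 < i ->
  (forall j, 0 < j <= i -> palw (P j) /\ take (l j) (P i) = P j /\ (j < i -> l j < l i)).
Proof.
elim: i => [//|i IH] _.
case: (posnP i) => [->|ip].
  move=> j hj; have -> : j = 1 by lia. by rewrite take0.
have Hj := IH ip.
have Hp : palw (P i) by case: (Hj i) => //; lia.
have hv := validP ip.
have [D [HD [Dne Hpal]]] : exists D, P i.+1 = P i ++ D /\ 0 < size D /\ palw (P i ++ D).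
  rewrite piS //.
  move: hv; case: (psi i) => [m|a] hv.
    exists (drop (size (P m)) (P i)); split => //.
    have [Pm [Hm1 Hm2]] := Hj m ltac:(lia).
    split; first by rewrite size_drop; have := Hm2 ltac:(lia); lia.
    have Em : P i = P m ++ drop (size (P m)) (P i) by rewrite -{1}Hm1 cat_take_drop.
    set D' := drop (l m) (P i) in Em *.
    have K : rev D' ++ P m = P i.
      by rewrite -{1}Pm -rev_cat -Em; exact Hp.
    by rewrite /palw rev_cat Hp {1}Em catA K.
  exists (a :: P i); split => //; split => //.
  by rewrite /palw rev_cat rev_cons Hp cat_rcons.
rewrite HD => j hj.
case: (ltnP j i.+1) => h.
  have [H0 [H1 H2]] := Hj j ltac:(lia).
  split => //.
  rewrite size_cat take_cat.
  case: (ltnP j i) => h2.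
    by have h3 := H2 h2; rewrite h3; split => //; lia.
  have -> : j = i by lia.
  by rewrite ltnn subnn take0 cats0; split => //; lia.
have -> : j = i.+1 by lia.
by rewrite HD take_size; split => //; lia.
Qed.

End Pis.


Section More.
Variable A : Type.
Variable x0 : A.
Variable psi : nat -> (nat + A)%type.
Hypothesis Hv : valid_psi psi.

Notation P := (Defs.pi psi).
Notation l i := (size (P i)).

Lemma pal_pi i : 0 < i -> palw (P i).
Proof. move=> ip; by case: (basic Hv ip (j:=i)) => //; lia. Qed.

Lemma take_pi j i : 0 < j <= i -> take (l j) (P i) = P j.
Proof. move=> h; have ip : 0 < i by lia. by case: (basic Hv ip h) => _ []. Qed.

Lemma lt_l j i : 0 < j < i -> l j < l i.
Proof. move=> h; have ip : 0 < i by lia. case: (basic Hv ip (j:=j)); first lia. by move=> _ [_ ->] //; lia. Qed.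

Lemma le_l j i : 0 < j <= i -> l j <= l i.
Proof. move=> h; case: (ltngtP j i) => hh; [have := lt_l (j:=j) (i:=i); lia | lia | by rewrite hh]. Qed.

Lemma l_inj j i : 0 < j -> 0 < i -> l j = l i -> j = i.
Proof.
move=> j0 i0 E; case: (ltngtP j i) => // hh.
  have := lt_l (j:=j) (i:=i); lia.
have := lt_l (j:=i) (i:=j); lia.
Qed.

Lemma l1 : l 1 = 0.
Proof. by []. Qed.

Lemma lS_inr i a : 0 < i -> psi i = inr a -> P i.+1 = P i ++ a :: P i.
Proof. move=> ip E; by rewrite (piS Hv ip) E. Qed.

Lemma lS_inl i m : 0 < i -> psi i = inl m ->
  P i.+1 = P i ++ drop (l m) (P i) /\ 0 < m < i /\ l m < l i.
Proof.
move=> ip E; have := validP Hv ip; rewrite E => hm.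
split; first by rewrite (piS Hv ip) E.
split; first lia. apply: lt_l; lia.
Qed.

Lemma per_piS i : 0 < i -> per x0 (P i.+1) (l i.+1 - l i).
Proof.
move=> ip; apply: border_per; first exact: pal_pi.
  apply: le_l; lia.
rewrite take_pi; [exact: pal_pi | lia].
Qed.

Lemma l_ge i : 0 < i -> i.-1 <= l i.
Proof.
elim: i => [//|i IH] _; case: (posnP i) => [->//|ip].
have := IH ip; have := lt_l (j:=i) (i:=i.+1); lia.
Qed.

Definition complete n := forall k, k <= l n -> palw (take k (P n)) ->
  exists j, 0 < j <= n /\ l j = k.

Lemma complete1 : complete 1.
Proof. move=> k; rewrite l1 => hk _; exists 1; rewrite l1; lia. Qed.

Lemma complete_down j n : 0 < j <= n -> complete n -> complete j.
Proof.
move=> hj C k hk Hk.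
have E : take k (P j) = take k (P n).
  by rewrite -(take_pi hj) -take_min; congr take; lia.
rewrite E in Hk; have := C k ltac:(have := le_l hj; lia) Hk.
case=> j' [hj' E']; exists j'; split => //.
case: (leqP j' j) => // h; have := lt_l (j:=j) (i:=j'); lia.
Qed.

Lemma per_struct n f : complete n -> 0 < n -> per x0 (P n) f -> 0 < f <= l n ->
  exists j, 0 < j < n /\ l j = l n - f.
Proof.
move=> C n0 Hf hf.
have := per_pal_take (pal_pi n0) Hf ltac:(lia).
move/(C _ (leq_subr _ _)) => [j [hj E]].
exists j; split => //; case: (ltngtP j n) => hh; [lia|lia|subst j; lia].
Qed.

Lemma minper n f : complete n -> 1 < n -> per x0 (P n) f -> 0 < f <= l n ->
  l n - l n.-1 <= f.
Proof.
move=> C n1 Hf hf; have [j [hj E]] := per_struct C ltac:(lia) Hf hf.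
have := le_l (j:=j) (i:=n.-1); lia.
Qed.

Lemma inT1 : in_T psi 1.
Proof. split => //; have := Hv (leqnn 1); case: (psi 1) => // m; lia. Qed.

Lemma notT u : 1 < u -> ~ in_T psi u -> psi u = inl u.-1.
Proof.
move=> u1 hT; have := validP Hv (ltnW u1).
case E: (psi u) => [m|a] hm.
  case: (ltnP m u.-1) => h; last by congr inl; lia.
  exfalso; apply: hT; split; [lia|]; rewrite E; apply/andP; lia.
by exfalso; apply: hT; split; [lia|]; rewrite E.
Qed.

Lemma prevT i : 1 < i -> exists s, in_T psi s /\ s < i /\ forall u, s < u -> u < i -> ~ in_T psi u.
Proof.
elim: i => [//|i IH] hi.
case: (ltngtP i 1) => h; [lia| |].
  case: (classic (in_T psi i)) => hT.
    exists i; split => //; split => //; lia.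
  have [s [hs [si Hs]]] := IH h.
  exists s; split => //; split; [lia|] => u su ui.
  case: (ltngtP u i) => hu; [exact: Hs|lia|by rewrite hu].
subst i; exists 1; split; [exact: inT1|split => //; lia].
Qed.

End More.


Section Core.
Variable A : Type.
Variable x0 : A.
Variable psi : nat -> (nat + A)%type.
Hypothesis Hv : valid_psi psi.

Notation P := (Defs.pi psi).
Notation l i := (size (P i)).
Notation per := (per x0).
Notation complete := (complete psi).

Lemma rcons_per x d a : per x d -> 0 < d -> d <= size x -> nth x0 x (size x - d) = a ->
  per (rcons x a) d.
Proof.
move=> H d0 hd ha t; rewrite size_rcons => ht.
rewrite !nth_rcons.
case: (ltnP (t + d) (size x)) => h.
  have -> : t < size x by lia. exact: H.
have -> : t < size x by lia.
have -> : t + d == size x by apply/eqP; lia.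
rewrite -ha; congr nth; lia.
Qed.

Lemma nth_pre j i t : 0 < j <= i -> t < l j -> nth x0 (P i) t = nth x0 (P j) t.
Proof. move=> hj ht; by rewrite -(take_pi Hv hj) nth_take. Qed.

Lemma compl_iff i : 0 < i -> complete i ->
  (complete i.+1 <-> forall f, 0 < f -> f < l i.+1 - l i -> ~ per (P i.+1) f).
Proof.
move=> i0 C; have hlt := lt_l Hv (j:=i) (i:=i.+1) ltac:(lia).
split.
  move=> C' f f0 fe Hf.
  have := per_pal_take (pal_pi Hv (ltn0Sn i)) Hf ltac:(lia).
  move/(C' _ (leq_subr _ _)) => [j [hj E]].
  case: (ltngtP j i.+1) => hh; last (by subst j; lia).
    have := le_l Hv (j:=j) (i:=i); lia.
  lia.
move=> H k hk Hk.
case: (leqP k (l i)) => h1.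
  have E : take k (P i.+1) = take k (P i).
    rewrite -[in RHS](take_pi Hv (j:=i) (i:=i.+1)); last lia. by rewrite -take_min; congr take; lia.
  rewrite E in Hk; have [j [hj E']] := C k h1 Hk.
  exists j; split => //; lia.
case: (ltngtP k (l i.+1)) => h2; last by exists i.+1; split => //; lia.
  exfalso; apply: (H (l i.+1 - k)); try lia.
  apply: border_per => //; first exact: pal_pi.
lia.
Qed.

Lemma step_notT i : 1 < i -> ~ in_T psi i -> complete i -> complete i.+1.
Proof.
move=> i1 hT C; apply/(compl_iff (ltnW i1) C) => f f0 fe Hf.
have E := notT Hv i1 hT.
have [_ [hm hlm]] := lS_inl Hv (ltnW i1) E.
have hS : l i.+1 = l i + (l i - l i.-1).
  by have [-> _] := lS_inl Hv (ltnW i1) E; rewrite size_cat size_drop.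
have Hf' : per (P i) f.
  by rewrite -(take_pi Hv (j:=i) (i:=i.+1)); [apply: per_take | lia].
have := minper Hv C i1 Hf' ltac:(lia). lia.
Qed.

Lemma complete2 : complete 2.
Proof.
apply: (proj2 (compl_iff (i:=1) (ltn0Sn 0) (@complete1 _ psi))) => f f0.
have := Hv (ltn0Sn 0); case E: (psi 1) => [m|a]; first lia.
by rewrite (lS_inr Hv (ltn0Sn 0) E) /=; lia.
Qed.

End Core.


Lemma dv_small d n : 0 < n -> n < d -> d %| n -> False.
Proof. move=> n0 nd dv; have := dvdn_leq n0 dv; lia. Qed.

Lemma dv_mid d n : d %| n -> d < n -> n < d + d -> False.
Proof.
move=> dv h1 h2; apply: (@dv_small d (n - d)); try lia.
by rewrite dvdn_sub // dvdnn.
Qed.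

Lemma take_rcons_cat (T : Type) (x y : seq T) a : take (size x).+1 (x ++ a :: y) = rcons x a.
Proof. by elim: x => [|b x IH] //=; rewrite ?take0 // IH. Qed.

Section TCase.
Variable A : Type.
Variable x0 : A.
Variable psi : nat -> (nat + A)%type.
Hypothesis Hv : valid_psi psi.

Notation P := (Defs.pi psi).
Notation l i := (size (P i)).
Notation per := (per x0).
Notation complete := (complete psi).

Variables (i s : nat).
Hypotheses (i1 : 1 < i) (HTi : in_T psi i) (HTs : in_T psi s) (si : s < i)
 (Hb : forall u, s < u -> u < i -> ~ in_T psi u) (Ci : complete i).

Local Notation d := (l s.+1 - l s).

Lemma s0 : 0 < s.
Proof. by case: HTs. Qed.

Lemma F1 u : s <= u <= i -> l u = l s + (u - s) * d.
Proof.
have s0' := s0.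
suff H : forall n, s + n.+1 <= i -> l (s+n) = l s + n*d /\ l (s+n.+1) = l s + n.+1 * d.
  move=> hu; case: (ltngtP s u) => h; last (by subst u; rewrite subnn mul0n addn0).
    have [_ E] := H (u - s).-1 ltac:(lia). have eu : s + (u - s).-1.+1 = u by lia. rewrite eu in E; rewrite E; congr (_ + _ * _); lia.
  lia.
elim=> [|n IH] hn.
  rewrite addn0 addn1 mul0n mul1n addn0; split => //.
  have := lt_l Hv (j:=s) (i:=s.+1); lia.
have [IH1 IH2] := IH ltac:(lia).
split => //.
have u1 : 1 < s + n.+1 by lia.
have E := notT Hv u1 (@Hb (s + n.+1) ltac:(lia) ltac:(lia)).
have [E1 [_ E3]] := lS_inl Hv (ltnW u1) E.
have -> : s + n.+2 = (s + n.+1).+1 by lia.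
rewrite E1 size_cat size_drop.
have -> : (s + n.+1).-1 = s + n by lia.
rewrite IH1 IH2 !mulSn in E3 *. lia.
Qed.

Lemma Fd : l i - l i.-1 = d.
Proof.
rewrite (F1 (u:=i)); last lia. rewrite (F1 (u:=i.-1)); last lia.
have E : i - s = (i.-1 - s).+1 by lia. rewrite E mulSn. lia.
Qed.

Lemma Fper : per (P i) d.
Proof.
rewrite -Fd. have := per_piS x0 Hv (i:=i.-1) ltac:(lia).
by rewrite prednK //; lia.
Qed.

Lemma d0 : 0 < d.
Proof. have := lt_l Hv (j:=s) (i:=s.+1) ltac:(have := s0; lia). lia. Qed.

Lemma dle : d <= l i.
Proof. rewrite -Fd; lia. Qed.

Lemma e_gt : d < l i.+1 - l i.
Proof.
rewrite -Fd; have [_ hT] := HTi.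
case E: (psi i) hT => [m|a] hT.
  move/andP: hT => hT.
  have [E1 [hm E3]] := lS_inl Hv (i:=i) ltac:(lia) E.
  rewrite E1 size_cat size_drop.
  have := lt_l Hv (j:=m) (i:=i.-1) ltac:(lia). lia.
rewrite (lS_inr Hv (i:=i) ltac:(lia) E) size_cat /=. lia.
Qed.

Lemma e'_lt : 1 < s -> l s - l s.-1 < d.
Proof.
move=> s1; have [_ hT] := HTs.
case E: (psi s) hT => [m|a] hT.
  move/andP: hT => hT.
  have [E1 [hm E3]] := lS_inl Hv (i:=s) ltac:(lia) E.
  rewrite E1 size_cat size_drop.
  have := lt_l Hv (j:=m) (i:=s.-1) ltac:(lia). lia.
rewrite (lS_inr Hv (i:=s) ltac:(lia) E) size_cat /=. lia.
Qed.

Lemma Ks m0 : psi s = inl m0 -> 1 < s /\ l s < d + (l s - l s.-1).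
Proof.
move=> E; have [E1 [hm E3]] := lS_inl Hv s0 E.
have s1 : 1 < s by lia. split => //.
have Cs1 : complete s.+1 by apply: (complete_down Hv _ Ci); lia.
have Cs : complete s by apply: (complete_down Hv _ Ci); lia.
have hd := e'_lt s1.
case: (ltnP (l s) (d + (l s - l s.-1))) => // hc; exfalso.
have hlt := lt_l Hv (j:=s.-1) (i:=s) ltac:(lia).
have P1 : per (P s) (l s - l s.-1).
  have := per_piS x0 Hv (i:=s.-1) ltac:(lia). by rewrite prednK //; lia.
have P2 : per (P s.+1) d := per_piS x0 Hv (i:=s) s0.
have P2' : per (P s) d.
  have := per_take (L:=l s) P2. rewrite (take_pi Hv (j:=s) (i:=s.+1)) //. lia.
have G := FW P1 P2' ltac:(lia) d0 ltac:(lia).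
set g := gcdn _ _ in G.
have g0 : 0 < g by rewrite gcdn_gt0; apply/orP; left; lia.
have gle : g <= l s - l s.-1 by apply: dvdn_leq; [lia | apply: dvdn_gcdl].
have gd : g %| d by apply: dvdn_gcdr.
have G' : per (P s.+1) g.
  apply: (per_ext (G:=d) (L:=l s)) => //; first exact: d0.
    rewrite E1 size_cat size_drop; lia.
  by rewrite (take_pi Hv (j:=s) (i:=s.+1)) //; lia.
have := minper Hv Cs1 (ltac:(lia) : 1 < s.+1) G'.
have := le_l Hv (j:=s) (i:=s.+1) ltac:(lia). 
move=> h1 h2; have := h2 ltac:(lia). rewrite /=. lia.
Qed.

Lemma let_pos a0 : psi s = inr a0 -> nth x0 (P i) (l i.-1) = a0.
Proof.
move=> E.
have Hp := Fper. have d0' := d0.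
have hlt := lt_l Hv (j:=i.-1) (i:=i) ltac:(have := s0; lia).
have hlt2 := lt_l Hv (j:=s) (i:=i) ltac:(have := s0; lia).
rewrite (per_mod d0' Hp hlt) (F1 (u:=i.-1)); last lia.
rewrite addnC modnMDl -(per_mod d0' Hp hlt2).
have hs1 := lt_l Hv (j:=s) (i:=s.+1) ltac:(have := s0; lia).
rewrite (nth_pre x0 Hv (j:=s.+1) (i:=i)); [ | lia | done].
by rewrite (lS_inr Hv s0 E) nth_cat ltnn subnn.
Qed.

Lemma dirA : complete i.+1 -> psi i <> psi s /\ match psi i with inr _ => true | inl m => m < s end.
Proof.
move=> C'.
have Hiff := compl_iff x0 Hv (ltnW i1) Ci.
have NP := (proj1 Hiff C') d d0 e_gt.
apply: NNPP => Hn; apply: NP.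
have s0' := s0. have d0' := d0.
have HPe := per_piS x0 Hv (ltnW i1).
have Fi := F1 (u:=i) ltac:(lia).
have hsi := lt_l Hv (j:=i) (i:=i.+1) ltac:(lia).
case E: (psi i) => [m|a].
  have [E1 [hm E3]] := lS_inl Hv (ltnW i1) E.
  have [k Ek] : exists k, l i.+1 - l i = k * d.
    case: (leqP s m) => hsm.
      have Fm := F1 (u:=m) ltac:(lia).
      exists ((i - s) - (m - s)); rewrite mulnBl E1 size_cat size_drop. lia.
    have Es : psi s = inl m.
      case: (classic (psi i = psi s)) => [<-//|h]. exfalso; apply: Hn; split => //. by rewrite E.
    have [E1s [hms E3s]] := lS_inl Hv s0' Es.
    exists (i - s).+1; rewrite mulSn E1 size_cat size_drop.
    move: Fi; rewrite E1s size_cat size_drop. lia.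
  have e_le : l i.+1 - l i <= l i by rewrite E1 size_cat size_drop; lia.
  have Pt : per (take (l i) (P i.+1)) d.
    rewrite (take_pi Hv (j:=i) (i:=i.+1)); [exact: Fper | lia].
  have dv : d %| l i.+1 - l i by rewrite Ek dvdn_mull.
  exact: (per_ext (G := l i.+1 - l i) (L := l i) ltac:(lia) d0' HPe dv e_le Pt).
have Es : psi s = inr a.
  case: (classic (psi i = psi s)) => [<-//|h]. exfalso; apply: Hn; split => //. by rewrite E.
have E1 := lS_inr Hv (ltnW i1) E.
have E1s := lS_inr Hv s0' Es.
have Ed : d = l s + 1 by rewrite E1s size_cat /=; lia.
have e_eq : l i.+1 - l i = (i - s).+1 * d.
  rewrite E1 size_cat /= mulSn. move: Fi Ed; move: ((i - s) * d) => X. lia.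
have dv : d %| l i.+1 - l i by rewrite e_eq dvdn_mull.
have e_le : l i.+1 - l i <= (l i).+1 by rewrite E1 size_cat /=; lia.
have Pt : per (take (l i).+1 (P i.+1)) d.
  rewrite E1 take_rcons_cat.
  apply: rcons_per; [exact: Fper| exact: d0 | exact: dle |].
  have hl : l i - d = l i.-1.
    rewrite -Fd; have := lt_l Hv (j:=i.-1) (i:=i) ltac:(lia). lia.
  by rewrite hl (let_pos Es).
exact: (per_ext (G := l i.+1 - l i) (L := (l i).+1) ltac:(lia) d0' HPe dv e_le Pt).
Qed.

Lemma dirB : psi i <> psi s -> match psi i with inr _ => true | inl m => m < s end -> complete i.+1.
Proof.
move=> N1 N2.
have s0' := s0. have d0' := d0. have dle' := dle. have eg := e_gt.
have Fi := F1 (u:=i) ltac:(lia).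
have hsi := lt_l Hv (j:=i) (i:=i.+1) ltac:(lia).
have HPe := per_piS x0 Hv (ltnW i1).
have [X [EX hX]] : exists X, X = (i - s) * d /\ d <= X.
  exists ((i-s)*d); split => //. apply: leq_pmull; lia.
rewrite -EX in Fi.
have hsize : l i.+1 <= (l i).*2.+1.
  case E: (psi i) => [m|a].
    have [E1 _] := lS_inl Hv (ltnW i1) E. rewrite E1 size_cat size_drop; lia.
  rewrite (lS_inr Hv (ltnW i1) E) size_cat /=; lia.
apply: (proj2 (compl_iff x0 Hv (ltnW i1) Ci)) => f f0 fe Hf.
have [e Ee] : exists e, e = l i.+1 - l i by eexists.
rewrite -Ee in fe HPe eg.
have G := FW Hf HPe f0 ltac:(lia) ltac:(lia).
have [g Eg] : exists g, g = gcdn f e by eexists.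
rewrite -Eg in G.
have g0 : 0 < g by rewrite Eg gcdn_gt0 f0.
have gf : g <= f by rewrite Eg; apply: dvdn_leq => //; apply: dvdn_gcdl.
have ge : g %| e by rewrite Eg; apply: dvdn_gcdr.
have Gi : per (P i) g.
  have := per_take (L:=l i) G. by rewrite (take_pi Hv (j:=i) (i:=i.+1)) //; lia.
have [j [hj Ej]] := per_struct Hv Ci (ltnW i1) Gi ltac:(lia).
case: (leqP s j) => hsj.
  have Fj := F1 (u:=j) ltac:(lia).
  have dg : d %| g.
    have -> : g = ((i - s) - (j - s)) * d.
      rewrite mulnBl -EX. move: Fj; move: ((j - s) * d) => Y. lia.
    by rewrite dvdn_mull.
  have Qd : per (P i.+1) d.
    have Pt : per (take (l i) (P i.+1)) d.
      rewrite (take_pi Hv (j:=i) (i:=i.+1)); [exact Fper| lia].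
    exact: (per_ext (G:=g) (L:=l i) g0 d0' G dg ltac:(lia) Pt).
  have H2 := FW Qd HPe d0' ltac:(lia) ltac:(lia).
  have [h Eh] : exists h, h = gcdn d e by eexists.
  rewrite -Eh in H2.
  have h0 : 0 < h by rewrite Eh gcdn_gt0 d0'.
  have hd : h <= d by rewrite Eh; apply: dvdn_leq => //; apply: dvdn_gcdl.
  have Hi : per (P i) h.
    have := per_take (L:=l i) H2. by rewrite (take_pi Hv (j:=i) (i:=i.+1)) //; lia.
  have := minper Hv Ci i1 Hi ltac:(lia). rewrite Fd => hd'.
  have de : d %| e.
    have hh : h = d by lia. by rewrite -hh Eh dvdn_gcdr.
  case Ei: (psi i) N1 N2 => [m|a] N1 N2.
    have [E1 [hm E3]] := lS_inl Hv (ltnW i1) Ei.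
    have hms := lt_l Hv (j:=m) (i:=s) ltac:(lia).
    have ee : e = X + (l s - l m) by rewrite Ee E1 size_cat size_drop; lia.
    have dv : d %| l s - l m by move: de; rewrite ee EX dvdn_addr ?dvdn_mull.
    case Es: (psi s) N1 => [m0|a0] N1.
      have [hs1 hK] := Ks Es.
      have hlt' := e'_lt hs1.
      have [E1s [hm0 E3s]] := lS_inl Hv s0' Es.
      have Ed : d = l s - l m0 by rewrite E1s size_cat size_drop; lia.
      case: (ltngtP (l s - l m) d) => hc.
      - exact: (dv_small (ltac:(lia) : 0 < l s - l m) hc dv).
      - exact: (dv_mid dv hc ltac:(lia)).
      - have : l m = l m0 by lia.
        move/(l_inj Hv); move=> H; apply: N1. rewrite H //; lia.
    have E1s := lS_inr Hv s0' Es.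
    have Ed : d = l s + 1 by rewrite E1s size_cat /=; lia.
    by apply: (@dv_small d (l s - l m)) => //; lia.
  have E1 := lS_inr Hv (ltnW i1) Ei.
  have ee : e = X + (l s + 1) by rewrite Ee E1 size_cat /=; lia.
  have dv : d %| l s + 1 by move: de; rewrite ee EX dvdn_addr ?dvdn_mull.
  case Es: (psi s) N1 => [m0|a0] N1.
    have [hs1 hK] := Ks Es.
    have hlt' := e'_lt hs1.
    have [E1s [hm0 E3s]] := lS_inl Hv s0' Es.
    have Ed : d = l s - l m0 by rewrite E1s size_cat size_drop; lia.
    exact: (dv_mid dv ltac:(lia) ltac:(lia)).
  apply: N1; congr inr.
  have hl : l i - d = l i.-1.
    rewrite -Fd; have := lt_l Hv (j:=i.-1) (i:=i) ltac:(lia). lia.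
  have T := @Qd (l i - d) ltac:(rewrite E1 size_cat /=; lia).
  move: T; rewrite E1 nth_cat ifT; last lia.
  have -> : l i - d + d = l i by lia.
  rewrite nth_cat ltnn subnn /= hl (let_pos Es). by [].
have hs1 : 1 < s by lia.
have hlt' := e'_lt hs1.
have hjs := le_l Hv (j:=j) (i:=s.-1) ltac:(lia).
have hjs' := lt_l Hv (j:=j) (i:=s) ltac:(lia).
have hs1' := lt_l Hv (j:= s.-1) (i:=s) ltac:(lia).
have gg : g = X + (l s - l j) by lia.
have e2 : e < g + g.
  case Ei: (psi i) N2 => [m|a] N2.
    have [E1 [hm E3]] := lS_inl Hv (ltnW i1) Ei.
    have hms := lt_l Hv (j:=m) (i:=s) ltac:(lia).
    have ee : e = X + (l s - l m) by rewrite Ee E1 size_cat size_drop; lia.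
    case Es: (psi s) => [m0|a0].
      have [_ hK] := Ks Es. lia.
    have E1s := lS_inr Hv s0' Es.
    have Ed : d = l s + 1 by rewrite E1s size_cat /=; lia.
    lia.
  have E1 := lS_inr Hv (ltnW i1) Ei.
  have ee : e = X + (l s + 1) by rewrite Ee E1 size_cat /=; lia.
  case Es: (psi s) => [m0|a0].
    have [_ hK] := Ks Es. lia.
  have E1s := lS_inr Hv s0' Es.
  have Ed : d = l s + 1 by rewrite E1s size_cat /=; lia.
  lia.
exact: (dv_mid ge ltac:(lia) e2).
Qed.

End TCase.


Definition cond A (psi : nat -> (nat + A)%type) i := forall s, in_T psi s -> in_T psi i -> s < i ->
  (forall u, s < u -> u < i -> ~ in_T psi u) ->
  psi i <> psi s /\ match psi i with inr _ => true | inl m => m < s end.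

Lemma red_cond A (psi : nat -> (nat + A)%type) : reduced psi <-> forall i, cond psi i.
Proof. split => H; [move=> i s; exact: H | move=> s t; exact: H]. Qed.

Section Assemble.
Variable A : Type.
Variable x0 : A.
Variable psi : nat -> (nat + A)%type.
Hypothesis Hv : valid_psi psi.
Notation complete := (complete psi).

Lemma core i : 0 < i -> complete i -> (complete i.+1 <-> cond psi i).
Proof.
move=> i0 Ci.
case: (ltngtP i 1) => hi; first lia.
  case: (classic (in_T psi i)) => hT.
    have [s [hs [si Hs]]] := prevT Hv hi.
    split.
      move=> C' s' hs' _ si' Hs'.
      have -> : s' = s.
        case: (ltngtP s' s) => // hh; exfalso.
          exact: (Hs' s hh si hs).
        exact: (Hs s' hh si' hs').
      have [N1 N2] := dirA x0 Hv hi hT hs si Hs Ci C'.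
      split => //; move: N2; case: (psi i) => //.
    move=> Hc; have [N1 N2] := Hc s hs hT si Hs.
    have N2' : is_true (if psi i is inl m then m < s else true) by move: N2; case: (psi i).
    exact: (dirB x0 Hv hi hT hs si Hs Ci N1 N2').
  split; [move=> _ s _ hT' | move=> _]; [by [] |].
  exact: (step_notT x0 Hv hi hT Ci).
subst i; split => _; first by move=> s [hs _] _ si; lia.
exact: (complete2 x0 Hv).
Qed.

Lemma red_complete : reduced psi -> forall i, 0 < i -> complete i.
Proof.
move=> /red_cond H; elim=> [//|i IH] _.
case: (posnP i) => [->|ip]; first exact: complete1.
by apply/(core ip (IH ip)).
Qed.

Lemma complete_red : (forall i, 0 < i -> complete i) -> reduced psi.
Proof.
move=> H; apply/red_cond => i.
case: (posnP i) => [->|ip]; first by move=> s _ [] //.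
by apply/(core ip (H i ip)); apply: H.
Qed.

End Assemble.


Section Wpsi.
Variable A : Type.
Variable w : nat -> A.
Variable psi : nat -> (nat + A)%type.
Hypothesis Hv : valid_psi psi.
Hypothesis Hw : is_wpsi psi w.
Notation P := (Defs.pi psi).
Notation l i := (size (P i)).

Lemma nth_w i k : 0 < i -> k < l i -> nth (w 0) (P i) k = w k.
Proof. move=> i0 hk; rewrite (set_nth_default (w k)) //; exact: Hw. Qed.

Lemma pal_l i : 0 < i -> pal_prefix w (l i).
Proof.
move=> i0 k hk.
rewrite -(nth_w i0 hk) -(nth_w i0 (k:=(l i).-1 - k)); last lia.
rewrite (pal_nth (w 0) (pal_pi Hv i0) hk); congr nth; lia.
Qed.

Lemma pal_take_w i k : 0 < i -> k <= l i -> pal_prefix w k -> palw (take k (P i)).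
Proof.
move=> i0 hk Hk; apply: (@nth_pal _ (w 0)); rewrite size_takel // => t ht.
rewrite !nth_take; try lia.
rewrite !nth_w //; try lia.
rewrite Hk //; congr w; lia.
Qed.

Lemma lS_le i : 0 < i -> l i.+1 <= (l i).*2.+1.
Proof.
move=> i0; case E: (psi i) => [m|a].
  have [E1 _] := lS_inl Hv i0 E. rewrite E1 size_cat size_drop; lia.
rewrite (lS_inr Hv i0 E) size_cat /=; lia.
Qed.

Lemma gap : pal_gap_cond w.
Proof.
move=> m m' Hm Hm' mm' Hb.
have ex : exists i, (0 < i) && (l i <= m) by exists 1; rewrite l1.
have ub : forall i, (0 < i) && (l i <= m) -> i <= m.+1.
  move=> i /andP[i0 hi]; have := l_ge Hv i0; lia.
case: (ex_maxnP ex ub) => i /andP[i0 hi] Hmax.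
have hi1 : m < l i.+1.
  case: (leqP (l i.+1) m) => // h; have := Hmax i.+1; rewrite h /= => H; have := H isT; lia.
have := lS_le i0.
case: (leqP m' (l i.+1)) => h; first lia.
exfalso; apply: (Hb (l i.+1)) => //. exact: pal_l.
Qed.

Lemma next_char i k : (forall i, 0 < i -> complete psi i) -> 0 < i ->
  pal_prefix w k -> l i < k -> l i.+1 <= k.
Proof.
move=> C i0 Hk hk; case: (leqP (l i.+1) k) => // h; exfalso.
have := pal_take_w (ltn0Sn i) (ltnW h) Hk.
move/(C _ (ltn0Sn i) _ (ltnW h)) => [j [hj Ej]].
case: (ltngtP j i.+1) => hh; last (by subst j; lia).
  have := le_l Hv (j:=j) (i:=i) ltac:(lia); lia.
lia.
Qed.

End Wpsi.

Section Uniq.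
Variable A : Type.
Variable w : nat -> A.
Variables psi1 psi2 : nat -> (nat + A)%type.
Hypotheses (Hv1 : valid_psi psi1) (Hv2 : valid_psi psi2) (Hr1 : reduced psi1) (Hr2 : reduced psi2)
  (Hw1 : is_wpsi psi1 w) (Hw2 : is_wpsi psi2 w).

Lemma same_l i : 0 < i -> size (Defs.pi psi1 i) = size (Defs.pi psi2 i).
Proof.
have C1 := red_complete (w 0) Hv1 Hr1. have C2 := red_complete (w 0) Hv2 Hr2.
elim: i => [//|i IH] _.
case: (posnP i) => [->//|ip].
have h1 := next_char Hv1 Hw1 (k := size (Defs.pi psi2 i.+1)) C1 ip (pal_l Hv2 Hw2 (ltn0Sn i)).
have h2 := next_char Hv2 Hw2 (k := size (Defs.pi psi1 i.+1)) C2 ip (pal_l Hv1 Hw1 (ltn0Sn i)).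
have l1 := lt_l Hv1 (j:=i) (i:=i.+1) ltac:(lia).
have l2 := lt_l Hv2 (j:=i) (i:=i.+1) ltac:(lia).
rewrite IH // in h1 l1. rewrite -IH // in h2 l2.
have := IH ip; lia.
Qed.

Lemma uniq_psi n : 0 < n -> psi1 n = psi2 n.
Proof.
move=> n0; have E := same_l (ltn0Sn n); have E0 := same_l n0.
case E1: (psi1 n) => [m1|a1]; case E2: (psi2 n) => [m2|a2].
- have [F1 [hm1 G1]] := lS_inl Hv1 n0 E1.
  have [F2 [hm2 G2]] := lS_inl Hv2 n0 E2.
  move: E; rewrite F1 F2 !size_cat !size_drop E0 => E.
  have Em : size (Defs.pi psi1 m1) = size (Defs.pi psi1 m2).
    rewrite (same_l (i:=m2)); [lia|lia].
  by rewrite (l_inj Hv1 _ _ Em) //; lia.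
- have [F1 [hm1 G1]] := lS_inl Hv1 n0 E1.
  move: E; rewrite F1 (lS_inr Hv2 n0 E2) !size_cat size_drop /= E0. lia.
- have [F2 [hm2 G2]] := lS_inl Hv2 n0 E2.
  move: E; rewrite F2 (lS_inr Hv1 n0 E1) !size_cat size_drop /= E0. lia.
- have e1 := nth_w Hw1 (ltn0Sn n) (k := size (Defs.pi psi1 n)).
  have e2 := nth_w Hw2 (ltn0Sn n) (k := size (Defs.pi psi1 n)).
  rewrite (lS_inr Hv1 n0 E1) nth_cat ltnn subnn size_cat /= in e1.
  rewrite (lS_inr Hv2 n0 E2) nth_cat -E0 ltnn subnn size_cat /= in e2.
  by rewrite e1 ?e2 //; lia.
Qed.

End Uniq.


Section Canon.
Variable A : Type.
Variable w : nat -> A.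
Hypothesis Hinf : inf_pal_prefixes w.
Hypothesis Hgap : pal_gap_cond w.

Definition palb n : bool := if excluded_middle_informative (pal_prefix w n) then true else false.

Lemma palbP n : palb n <-> pal_prefix w n.
Proof. rewrite /palb; case: excluded_middle_informative => //. Qed.

Lemma exnxt n : exists m, (n < m) && palb m.
Proof.
have [m [hm Hm]] := Hinf n.+1; exists m; apply/andP; split => //.
by apply/palbP.
Qed.

Definition nxt n := ex_minn (exnxt n).

Lemma nxtP n : n < nxt n /\ pal_prefix w (nxt n) /\ forall m, n < m -> pal_prefix w m -> nxt n <= m.
Proof.
rewrite /nxt; case: ex_minnP => m /andP[h1 h2] H; split => //; split; first exact/palbP.
move=> k hk Hk; apply: H; rewrite hk; exact/palbP.
Qed.

Fixpoint c k := match k with 0 => 0 | k'.+1 => nxt (c k') end.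

Lemma c_pal k : pal_prefix w (c k).
Proof. case: k => [|k] /=; first by move=> t. by case: (nxtP (c k)) => _ []. Qed.

Lemma c_lt k : c k < c k.+1.
Proof. by case: (nxtP (c k)). Qed.

Lemma c_mono j k : j < k -> c j < c k.
Proof.
elim: k => [//|k IH] h; have := c_lt k.
case: (ltngtP j k) => hh; [have := IH hh; lia | lia | by subst j].
Qed.

Lemma c_ge k : k <= c k.
Proof. elim: k => [//|k IH]; have := c_lt k; lia. Qed.

Lemma c_inj j k : c j = c k -> j = k.
Proof. move=> E; case: (ltngtP j k) => // h; [have := c_mono h | have := c_mono h]; lia. Qed.

Lemma c_next k m : c k < m -> pal_prefix w m -> c k.+1 <= m.
Proof. by case: (nxtP (c k)) => _ [_ H] /= /H. Qed.

Lemma all_c k : pal_prefix w k -> exists j, c j = k.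
Proof.
move=> Hk.
have ex : exists j, c j <= k by exists 0.
have ub : forall j, c j <= k -> j <= k by move=> j h; have := c_ge j; lia.
case: (ex_maxnP ex ub) => j hj Hmax.
exists j; case: (ltngtP (c j) k) => h; [|lia|done].
have := c_next h Hk => h2; have := Hmax j.+1 h2; lia.
Qed.

Lemma c_gap k : c k.+1 <= (c k).*2.+1.
Proof.
apply: (Hgap (@c_pal k) (@c_pal k.+1) (c_lt k)) => u h1 h2 Hu.
have := c_next h1 Hu; lia.
Qed.

Lemma c_mid k : c k.+1 != (c k).*2.+1 -> pal_prefix w ((c k).*2 - c k.+1).
Proof.
move=> hne t ht.
have hg := c_gap k. have hl := c_lt k.
have Pa := @c_pal k. have Pb := @c_pal k.+1.
set a := c k in hne ht hg hl Pa Pb *. set b := c k.+1 in hne ht hg hl Pb *.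
rewrite (Pa t); last lia.
rewrite (Pa ((a.*2 - b).-1 - t)); last lia.
rewrite (Pb (a.-1 - t)); last lia.
congr w; lia.
Qed.

Definition cidx k := find (fun j => c j == k) (iota 0 k.+1).

Lemma cidxP j : c (cidx (c j)) = c j.
Proof.
have hj := c_ge j.
have Hh : has (fun j' => c j' == c j) (iota 0 (c j).+1).
  apply/hasP; exists j => //; rewrite mem_iota; lia.
have := nth_find 0 Hh; rewrite -/(cidx (c j)).
rewrite nth_iota; last by rewrite -(size_iota 0 (c j).+1) -has_find.
by rewrite add0n => /eqP.
Qed.

Definition psi0 (n : nat) : (nat + A)%type :=
  match n with
  | 0 => inl 0
  | n'.+1 => if c n == (c n').*2.+1 then inr (w (c n')) else inl (cidx ((c n').*2 - c n)).+1
  end.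

Lemma psi0_valid : valid_psi psi0.
Proof.
case=> [//|n] _ /=.
case: eqP => // hne.
have [j Ej] := all_c (c_mid (introN eqP hne)).
rewrite -Ej.
have hg := c_gap n. have hl := c_lt n.
have d2 := addnn (c n).
have hne2 : c n.+1 <> (c n).*2.+1 := hne.
have hc : c (cidx (c j)) < c n by rewrite cidxP Ej; lia.
have hn : cidx (c j) < n.
  case: (ltnP (cidx (c j)) n) => // h.
  case: (ltngtP n (cidx (c j))) => hh; [have := c_mono hh; lia | lia | by rewrite -hh in hc; lia].
apply/andP; split; lia.
Qed.

Lemma mk_inr a b : b = a.*2.+1 -> pal_prefix w a -> pal_prefix w b ->
  mkseq w a ++ w a :: mkseq w a = mkseq w b.
Proof.
move=> Eb Pa Pb; have d2 := addnn a.
apply: (@eq_from_nth _ (w 0)); first by rewrite size_cat /= !size_mkseq; lia.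
rewrite size_cat /= !size_mkseq => t ht.
rewrite nth_mkseq; last lia.
rewrite nth_cat size_mkseq.
case: (ltnP t a) => h; first by rewrite nth_mkseq.
case: (ltngtP t a) => h2; [lia| |by rewrite h2 subnn].
have -> : t - a = (t - a - 1).+1 by lia.
rewrite /= nth_mkseq; last lia.
rewrite (Pb t); last lia.
rewrite (Pa (t - a - 1)); last lia.
congr w; lia.
Qed.

Lemma mk_inl a b p : p = a.*2 - b -> a < b -> b <= a.*2 -> pal_prefix w a -> pal_prefix w b ->
  mkseq w a ++ drop p (mkseq w a) = mkseq w b.
Proof.
move=> Ep ab ba Pa Pb; have d2 := addnn a.
apply: (@eq_from_nth _ (w 0)); first by rewrite size_cat size_drop !size_mkseq; lia.
rewrite size_cat size_drop !size_mkseq => t ht.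
rewrite [RHS]nth_mkseq; last lia.
rewrite nth_cat size_mkseq.
case: (ltnP t a) => h; first by rewrite nth_mkseq.
rewrite nth_drop nth_mkseq; last lia.
rewrite (Pb t); last lia.
rewrite (Pa (p + (t - a))); last lia.
congr w; lia.
Qed.

Lemma pi_psi0 i : 0 < i -> Defs.pi psi0 i = mkseq w (c i.-1).
Proof.
elim: i {-2}i (leqnn i) => [|N IH] i hi i0; first lia.
case: i hi i0 => [//|k] hk _.
case: (posnP k) => [->//|kp].
rewrite (piS psi0_valid kp).
case: k hk kp => [//|n] hn _.
rewrite IH //= ; try lia.
have Pa := @c_pal n. have Pb := @c_pal n.+1.
have hg := c_gap n. have hl := c_lt n.
case: eqP => hne.
  by rewrite (mk_inr hne).
have hne2 : c n.+1 <> (c n).*2.+1 := hne.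
have [j Ej] := all_c (c_mid (introN eqP hne)).
have Ej' := cidxP j. rewrite Ej in Ej'.
have d2 := addnn (c n).
have hb : c n.+1 <= (c n).*2 by lia.
have hcid : cidx ((c n).*2 - c n.+1) < n.+1.
  case: (ltnP (cidx ((c n).*2 - c n.+1)) n.+1) => // h.
  exfalso.
  case: (ltngtP n.+1 (cidx ((c n).*2 - c n.+1))) => hh.
  - have := c_mono hh; rewrite Ej'; lia.
  - lia.
  - rewrite -hh in Ej'. lia.
rewrite (IH (cidx ((c n).*2 - c n.+1)).+1); [|lia|lia].
rewrite size_mkseq /= Ej'.
apply: mk_inl => //; lia.
Qed.

Lemma psi0_w : is_wpsi psi0 w.
Proof.
move=> i i0 k; rewrite pi_psi0 // size_mkseq => hk; by rewrite nth_mkseq.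
Qed.

Lemma psi0_complete i : 0 < i -> complete psi0 i.
Proof.
move=> i0 k; rewrite pi_psi0 // size_mkseq => hk Hk.
have Pk : pal_prefix w k.
  move=> t ht.
  have := pal_nth (w 0) Hk (t := t); rewrite size_takel ?size_mkseq // => H.
  have := H ht; rewrite !nth_take; try lia.
  rewrite !nth_mkseq; try lia.
  move=> ->; congr w; lia.
have [j Ej] := all_c Pk.
exists j.+1; rewrite pi_psi0 //= size_mkseq; split => //.
case: (leqP j i.-1) => h; first lia.
have := c_mono h; lia.
Qed.

Lemma psi0_reduced : reduced psi0.
Proof. apply: (complete_red (w 0) psi0_valid) => i i0; exact: psi0_complete. Qed.

End Canon.


Theorem theorem4p14 (A : Type) (w : nat -> A) :
  inf_pal_prefixes w ->
  (pal_gap_cond w <->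
     exists psi : nat -> (nat + A)%type, valid_psi psi /\ is_wpsi psi w) /\
  ((exists psi : nat -> (nat + A)%type, valid_psi psi /\ is_wpsi psi w) <->
     exists psi : nat -> (nat + A)%type, valid_psi psi /\ reduced psi /\ is_wpsi psi w) /\
  (forall psi1 psi2 : nat -> (nat + A)%type,
     valid_psi psi1 -> reduced psi1 -> is_wpsi psi1 w ->
     valid_psi psi2 -> reduced psi2 -> is_wpsi psi2 w ->
     forall n, 1 <= n -> psi1 n = psi2 n).
Proof.
move=> Hinf.
have i_iii : pal_gap_cond w -> exists psi : nat -> (nat + A)%type, valid_psi psi /\ reduced psi /\ is_wpsi psi w.
  move=> Hg; exists (psi0 Hinf); split; [exact: (psi0_valid Hinf Hg) | split; [exact: (psi0_reduced Hg) | exact: (psi0_w Hg)]].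
have ii_i : (exists psi : nat -> (nat + A)%type, valid_psi psi /\ is_wpsi psi w) -> pal_gap_cond w.
  case=> psi [Hv Hw]; exact: (gap Hv Hw).
split; [split|split; [split|]].
- move/i_iii => [psi [? [? ?]]]; by exists psi.
- exact: ii_i.
- by move/ii_i/i_iii.
- case=> psi [? [? ?]]; by exists psi.
- move=> psi1 psi2 Hv1 Hr1 Hw1 Hv2 Hr2 Hw2 n n0.
  exact: (uniq_psi Hv1 Hv2 Hr1 Hr2 Hw1 Hw2 n0).
Qed.
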